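(* Let $\lambda_1>0$ and let $\chi:[0,\infty)\to[0,\infty)$ be smooth with $\chi(s)=1$ for $s\in[0,\lambda_1/2)$ and $\chi(s)=0$ for $s>\lambda_1$. For $m\ge2$ and $\lambda\ge0$ set $P_m(\lambda)=2m(\sqrt{\lambda+m^2}-m)+\chi(\lambda)$ and $P_\infty(\lambda)=\lambda+\chi(\lambda)$. Then for every positive integer $k$ there is $C_k>0$ such that for all $m\ge2$ and $\lambda>0$: (1) $\Big|\big(\tfrac{d}{d\lambda}\big)^k\big(\tfrac{P_m(\lambda)}{P_\infty(\lambda)}\big)\Big|\le\dfrac{C_k}{\lambda^k}$; (2) $\Big|\big(\tfrac{d}{d\lambda}\big)^k\big(\tfrac1{P_\infty(\lambda)}-\tfrac1{P_m(\lambda)}\big)\Big|\le\dfrac{C_k}{\lambda^k}\min\Big\{\dfrac1{m^2},\dfrac1{m(\lambda+1)^{1/2}}\Big\}$.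
   Context: In the paper $\lambda_1$ is the smallest Dirichlet eigenvalue of $-\Delta$ on a smooth bounded domain $\Omega\subset\mathbb{R}^n$, $n\ge3$. *)

(* Defs.v *)
From Stdlib Require Import Reals.
Open Scope R_scope.

Definition derivs_on (D : R -> Prop) (f : R -> R) (F : nat -> R -> R) : Prop :=
  (forall x, D x -> F 0%nat x = f x) /\
  (forall (n : nat) (x : R), D x -> derivable_pt_lim (F n) x (F (S n) x)).

Definition smooth_on (D : R -> Prop) (f : R -> R) : Prop :=
  exists F, derivs_on D f F.

Definition pos_reals (x : R) : Prop := 0 < x.

Definition P_m (chi : R -> R) (m lam : R) : R :=
  2 * m * (sqrt (lam + m ^ 2) - m) + chi lam.

Definition P_inf (chi : R -> R) (lam : R) : R := lam + chi lam.

(* Main.v *)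
Require Import Defs.
From Stdlib Require Import Reals Lra Lia.
From Coquelicot Require Import Coquelicot.
Open Scope R_scope.

Fixpoint Sym (n:nat) (w f : R -> R -> R) : Prop :=
  (exists C, 0 <= C /\ forall m l, 2 <= m -> 0 < l -> Rabs (f m l) <= C * w m l) /\
  match n with
  | O => True
  | S n' => exists f' : R -> R -> R, (forall m l, 2 <= m -> 0 < l -> is_derive (f m) l (f' m l))
                /\ Sym n' (fun m l => w m l / l) f'
  end.

Lemma isd_eq (f : R -> R) (x l l' : R) : is_derive f x l -> l = l' -> is_derive f x l'.
Proof. intros H ->; exact H. Qed.

Lemma loc_pos (l : R) : 0 < l -> locally l (fun t => 0 < t).
Proof. intros H. exact (open_gt 0 l H). Qed.

Lemma Sym_weaken n : forall w w' f c, 0 <= c ->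
  (forall m l, 2 <= m -> 0 < l -> w m l <= c * w' m l) -> Sym n w f -> Sym n w' f.
Proof.
  induction n as [|n IH]; intros w w' f c Hc Hw [[C [HC Hb]] Hr].
  - split; [|exact I]. exists (C*c); split; [nra|].
    intros m l Hm Hl. specialize (Hb m l Hm Hl). specialize (Hw m l Hm Hl).
    eapply Rle_trans; [exact Hb|]. rewrite Rmult_assoc. apply Rmult_le_compat_l; auto.
  - split.
    + exists (C*c); split; [nra|].
      intros m l Hm Hl. specialize (Hb m l Hm Hl). specialize (Hw m l Hm Hl).
      eapply Rle_trans; [exact Hb|]. rewrite Rmult_assoc. apply Rmult_le_compat_l; auto.
    + destruct Hr as [f' [Hd Hs]]. exists f'; split; [exact Hd|].
      apply (IH (fun m l => w m l / l) _ _ c Hc); [|exact Hs].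
      intros m l Hm Hl. specialize (Hw m l Hm Hl).
      unfold Rdiv. rewrite <- Rmult_assoc. apply Rmult_le_compat_r; auto.
      left; apply Rinv_0_lt_compat; auto.
Qed.

Lemma Sym_le n : forall w f, Sym (S n) w f -> Sym n w f.
Proof.
  induction n as [|n IH]; intros w f [Hb Hr].
  - split; [exact Hb|exact I].
  - split; [exact Hb|]. destruct Hr as [f' [Hd Hs]]. exists f'; split; auto.
Qed.

Lemma Sym_ext n : forall w f g, (forall m l, 2 <= m -> 0 < l -> f m l = g m l) ->
  Sym n w f -> Sym n w g.
Proof.
  induction n as [|n IH]; intros w f g He [[C [HC Hb]] Hr].
  - split; [|exact I]. exists C; split; auto. intros m l Hm Hl.
    rewrite <- He; auto.
  - split.
    + exists C; split; auto. intros m l Hm Hl. rewrite <- He; auto.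
    + destruct Hr as [f' [Hd Hs]]. exists f'; split; [|exact Hs].
      intros m l Hm Hl. apply (is_derive_ext_loc (f m)); [|auto].
      apply (filter_imp (fun t => 0 < t)); [|apply loc_pos; auto].
      intros t Ht; apply He; auto.
Qed.

Lemma Sym_plus n : forall w f g, Sym n w f -> Sym n w g ->
  Sym n w (fun m l => f m l + g m l).
Proof.
  induction n as [|n IH]; intros w f g [[C1 [HC1 Hb1]] Hr1] [[C2 [HC2 Hb2]] Hr2].
  - split; [|exact I]. exists (C1+C2); split; [lra|]. intros m l Hm Hl.
    specialize (Hb1 m l Hm Hl); specialize (Hb2 m l Hm Hl).
    eapply Rle_trans; [apply Rabs_triang|]. lra.
  - split.
    + exists (C1+C2); split; [lra|]. intros m l Hm Hl.
      specialize (Hb1 m l Hm Hl); specialize (Hb2 m l Hm Hl).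
      eapply Rle_trans; [apply Rabs_triang|]. lra.
    + destruct Hr1 as [f' [Hd1 Hs1]]; destruct Hr2 as [g' [Hd2 Hs2]].
      exists (fun m l => f' m l + g' m l); split; [|apply IH; auto].
      intros m l Hm Hl. apply (is_derive_plus (f m) (g m)); auto.
Qed.

Lemma Sym_scal n : forall w f c, Sym n w f -> Sym n w (fun m l => c * f m l).
Proof.
  induction n as [|n IH]; intros w f c [[C [HC Hb]] Hr].
  - split; [|exact I]. exists (Rabs c * C); split.
    + apply Rmult_le_pos; [apply Rabs_pos|auto].
    + intros m l Hm Hl. rewrite Rabs_mult, Rmult_assoc.
      apply Rmult_le_compat_l; [apply Rabs_pos|auto].
  - split.
    + exists (Rabs c * C); split.
      * apply Rmult_le_pos; [apply Rabs_pos|auto].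
      * intros m l Hm Hl. rewrite Rabs_mult, Rmult_assoc.
        apply Rmult_le_compat_l; [apply Rabs_pos|auto].
    + destruct Hr as [f' [Hd Hs]]. exists (fun m l => c * f' m l); split; [|apply IH; auto].
      intros m l Hm Hl. apply is_derive_scal; auto.
Qed.

Lemma Sym_cst n : forall w g, (exists K, 0 <= K /\ forall m l, 2 <= m -> 0 < l -> Rabs (g m) <= K * w m l) ->
  Sym n w (fun m _ => g m).
Proof.
  induction n as [|n IH]; intros w g HK.
  - split; [exact HK|exact I].
  - split; [exact HK|]. exists (fun _ _ => 0). split.
    + intros m l Hm Hl. apply (is_derive_const (g m) l).
    + apply (IH _ (fun _ => 0)). exists 0; split; [lra|]. intros; rewrite Rabs_R0; lra.
Qed.

Lemma Sym_id n : Sym n (fun _ l => l) (fun _ l => l).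
Proof.
  destruct n as [|n].
  - split; [|exact I]. exists 1; split; [lra|]. intros m l Hm Hl. rewrite Rabs_pos_eq; lra.
  - split.
    + exists 1; split; [lra|]. intros m l Hm Hl. rewrite Rabs_pos_eq; lra.
    + exists (fun _ _ => 1). split.
      * intros m l Hm Hl. apply (is_derive_id l).
      * apply (Sym_cst n _ (fun _ => 1)). exists 1; split; [lra|]. intros m l Hm Hl.
        rewrite Rabs_R1. unfold Rdiv; rewrite Rinv_r; lra.
Qed.

Lemma Sym_mult n : forall w1 w2 f g, Sym n w1 f -> Sym n w2 g ->
  Sym n (fun m l => w1 m l * w2 m l) (fun m l => f m l * g m l).
Proof.
  induction n as [|n IH]; intros w1 w2 f g H1 H2.
  - destruct H1 as [[C1 [HC1 Hb1]] _]; destruct H2 as [[C2 [HC2 Hb2]] _].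
    split; [|exact I]. exists (C1*C2); split; [nra|]. intros m l Hm Hl.
    specialize (Hb1 m l Hm Hl); specialize (Hb2 m l Hm Hl).
    rewrite Rabs_mult. replace (C1*C2*(w1 m l * w2 m l)) with ((C1 * w1 m l)*(C2*w2 m l)) by ring.
    apply Rmult_le_compat; auto; apply Rabs_pos.
  - pose proof (Sym_le _ _ _ H1) as H1'. pose proof (Sym_le _ _ _ H2) as H2'.
    destruct H1 as [[C1 [HC1 Hb1]] [f' [Hd1 Hs1]]]; destruct H2 as [[C2 [HC2 Hb2]] [g' [Hd2 Hs2]]].
    split.
    + exists (C1*C2); split; [nra|]. intros m l Hm Hl.
      specialize (Hb1 m l Hm Hl); specialize (Hb2 m l Hm Hl).
      rewrite Rabs_mult. replace (C1*C2*(w1 m l * w2 m l)) with ((C1 * w1 m l)*(C2*w2 m l)) by ring.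
      apply Rmult_le_compat; auto; apply Rabs_pos.
    + exists (fun m l => f' m l * g m l + f m l * g' m l). split.
      * intros m l Hm Hl. apply (is_derive_mult (f m) (g m)); auto. intros; apply Rmult_comm.
      * apply Sym_plus.
        -- apply (Sym_weaken n (fun m l => w1 m l / l * w2 m l) _ _ 1); [lra| |apply IH; auto].
           intros m l Hm Hl. right. field. lra.
        -- apply (Sym_weaken n (fun m l => w1 m l * (w2 m l / l)) _ _ 1); [lra| |apply IH; auto].
           intros m l Hm Hl. right. field. lra.
Qed.

Lemma Sym_inv n : forall w f c, 0 < c ->
  (forall m l, 2 <= m -> 0 < l -> 0 < w m l /\ w m l <= c * f m l) -> Sym n w f ->
  Sym n (fun m l => / w m l) (fun m l => / f m l).
Proof.
  assert (Hbound : forall w f c, 0 < c ->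
    (forall m l, 2 <= m -> 0 < l -> 0 < w m l /\ w m l <= c * f m l) ->
    exists C, 0 <= C /\ forall m l, 2 <= m -> 0 < l -> Rabs (/ f m l) <= C * / w m l).
  { intros w f c Hc Hw. exists c; split; [lra|]. intros m l Hm Hl.
    destruct (Hw m l Hm Hl) as [H0 H1].
    assert (Hf : 0 < f m l) by nra.
    rewrite Rabs_pos_eq by (left; apply Rinv_0_lt_compat; auto).
    replace (/ f m l) with (c * / (c * f m l)) by (field; lra).
    apply Rmult_le_compat_l; [lra|]. apply Rinv_le_contravar; auto. }
  induction n as [|n IH]; intros w f c Hc Hw Hs.
  - split; [eapply Hbound; eauto|exact I].
  - pose proof (Sym_le _ _ _ Hs) as Hs'.
    destruct Hs as [_ [f' [Hd Hs1]]]. split; [eapply Hbound; eauto|].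
    exists (fun m l => -1 * (f' m l * (/ f m l * / f m l))). split.
    + intros m l Hm Hl. destruct (Hw m l Hm Hl) as [H0 H1].
      assert (Hf : 0 < f m l) by nra.
      eapply isd_eq; [apply is_derive_inv; [apply Hd; auto|lra]|]. field. lra.
    + apply (Sym_weaken n (fun m l => w m l / l * (/ w m l * / w m l)) _ _ 1); [lra| |].
      * intros m l Hm Hl. destruct (Hw m l Hm Hl) as [H0 H1]. right. field. lra.
      * apply (Sym_ext n _ (fun m l => -1 * (f' m l * (/ f m l * / f m l)))); [auto|].
        apply Sym_scal. apply Sym_mult; [exact Hs1|].
        apply Sym_mult; eapply IH; eauto.
Qed.

Lemma Sym_sqrt n : forall w u c, 0 < c ->
  (forall m l, 2 <= m -> 0 < l -> 0 < w m l /\ w m l * w m l <= c * u m l) ->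
  Sym n (fun m l => w m l * w m l) u -> Sym n w (fun m l => sqrt (u m l)).
Proof.
  assert (Hbound : forall w u c, 0 < c ->
    (forall m l, 2 <= m -> 0 < l -> 0 < w m l /\ w m l * w m l <= c * u m l) ->
    Sym 0 (fun m l => w m l * w m l) u ->
    exists C, 0 <= C /\ forall m l, 2 <= m -> 0 < l -> Rabs (sqrt (u m l)) <= C * w m l).
  { intros w u c Hc Hw [[C [HC Hb]] _]. exists (sqrt C); split; [apply sqrt_pos|].
    intros m l Hm Hl. destruct (Hw m l Hm Hl) as [H0 H1].
    specialize (Hb m l Hm Hl).
    rewrite Rabs_pos_eq by apply sqrt_pos.
    rewrite <- (sqrt_square (w m l)) by lra. rewrite <- sqrt_mult_alt by auto.
    apply sqrt_le_1_alt. eapply Rle_trans; [apply Rle_abs|]. lra. }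
  induction n as [|n IH]; intros w u c Hc Hw Hs.
  - split; [eapply Hbound; eauto|exact I].
  - pose proof (Sym_le _ _ _ Hs) as Hs'.
    assert (Hs0 : Sym 0 (fun m l => w m l * w m l) u).
    { clear -Hs'. revert Hs'. generalize n. induction n0; intros H; auto. apply IHn0. apply Sym_le; auto. }
    destruct Hs as [_ [u' [Hd Hs1]]]. split; [eapply Hbound; eauto|].
    exists (fun m l => / 2 * (u' m l * / sqrt (u m l))). split.
    + intros m l Hm Hl. destruct (Hw m l Hm Hl) as [H0 H1].
      assert (Hu : 0 < u m l) by nra.
      eapply isd_eq; [apply is_derive_sqrt; [apply Hd; auto|lra]|].
      assert (0 < sqrt (u m l)) by (apply sqrt_lt_R0; auto). field. lra.
    + apply (Sym_weaken n (fun m l => w m l * w m l / l * / w m l) _ _ 1); [lra| |].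
      * intros m l Hm Hl. destruct (Hw m l Hm Hl) as [H0 H1]. right. field. lra.
      * apply Sym_scal. apply Sym_mult; [exact Hs1|].
        apply (Sym_inv n w _ (sqrt c)); [apply sqrt_lt_R0; auto| |eapply IH; eauto].
        intros m l Hm Hl. destruct (Hw m l Hm Hl) as [H0 H1]. split; auto.
        rewrite <- (sqrt_square (w m l)) by lra. rewrite <- sqrt_mult_alt by lra.
        apply sqrt_le_1_alt. lra.
Qed.

Lemma deriv_uniq_pos (f g : R -> R) x l1 l2 : 0 < x -> (forall t, 0 < t -> f t = g t) ->
  derivable_pt_lim f x l1 -> is_derive g x l2 -> l1 = l2.
Proof.
  intros Hx He H1 H2. apply is_derive_Reals in H1.
  apply (is_derive_ext_loc f g) in H1.
  - apply is_derive_unique in H1. apply is_derive_unique in H2. congruence.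
  - apply (filter_imp (fun t => 0 < t)); [|apply loc_pos; auto]. auto.
Qed.

Lemma Sym_bound n : forall w f, Sym n w f -> exists C, 0 <= C /\
  forall m, 2 <= m -> forall F, derivs_on pos_reals (f m) F ->
  forall l, 0 < l -> Rabs (F n l) <= C * w m l / l ^ n.
Proof.
  induction n as [|n IH]; intros w f Hs.
  - destruct Hs as [[C [HC Hb]] _]. exists C; split; auto.
    intros m Hm F [H0 _] l Hl. rewrite H0 by exact Hl. simpl. rewrite Rdiv_1_r. auto.
  - destruct Hs as [_ [f' [Hd Hs]]]. destruct (IH _ _ Hs) as [C [HC Hb]].
    exists C; split; auto. intros m Hm F [H0 H1] l Hl.
    assert (HF : derivs_on pos_reals (f' m) (fun j => F (S j))).
    { split.
      - intros x Hx. eapply deriv_uniq_pos; [exact Hx| |apply H1; exact Hx|apply Hd; auto].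
        intros t Ht; apply H0; exact Ht.
      - intros j x Hx. apply H1; auto. }
    specialize (Hb m Hm _ HF l Hl). simpl in Hb.
    eapply Rle_trans; [exact Hb|]. right. simpl. field. repeat split; try lra; apply pow_nonzero; lra.
Qed.

Lemma Sym_chain j : forall n w f, Sym (j + n) w f -> exists w' g,
  (forall m l, 2 <= m -> 0 < l -> Derive_n (f m) j l = g m l) /\ Sym n w' g.
Proof.
  induction j as [|j IH]; intros n w f Hs.
  - exists w, f; split; auto.
  - replace (S j + n)%nat with (j + S n)%nat in Hs by lia.
    destruct (IH _ _ _ Hs) as [w' [g [Hg [_ [g' [Hd Hs']]]]]].
    exists (fun m l => w' m l / l), g'; split; auto.
    intros m l Hm Hl. simpl. apply is_derive_unique.
    apply (is_derive_ext_loc (g m)); [|apply Hd; auto].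
    apply (filter_imp (fun t => 0 < t)); [|apply loc_pos; auto].
    intros t Ht; symmetry; apply Hg; auto.
Qed.

Lemma Sym_smooth w f : (forall n, Sym n w f) -> forall m, 2 <= m -> smooth_on pos_reals (f m).
Proof.
  intros Hs m Hm. exists (Derive_n (f m)). split.
  - intros x Hx; reflexivity.
  - intros n x Hx. destruct (Sym_chain n 1 w f (Hs _)) as [w' [g [Hg [_ [g' [Hd _]]]]]].
    assert (Hl : locally x (fun t => g m t = Derive_n (f m) n t)).
    { apply (filter_imp (fun t => 0 < t)); [|apply loc_pos; auto].
      intros t Ht; symmetry; apply Hg; auto. }
    assert (E : Derive_n (f m) (S n) x = g' m x).
    { simpl. apply is_derive_unique. apply (is_derive_ext_loc (g m)); auto. }
    rewrite E. apply is_derive_Reals. apply (is_derive_ext_loc (g m)); auto.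
Qed.

Lemma Sym_of_seq n : forall j (F : nat -> R -> R) w,
  (forall i x, 0 < x -> is_derive (F i) x (F (S i) x)) ->
  (forall i, exists C, 0 <= C /\ forall m l, 2 <= m -> 0 < l -> Rabs (F i l) <= C * w m l / l ^ i) ->
  Sym n (fun m l => w m l / l ^ j) (fun _ l => F j l).
Proof.
  assert (Hb : forall j (F : nat -> R -> R) w,
    (forall i, exists C, 0 <= C /\ forall m l, 2 <= m -> 0 < l -> Rabs (F i l) <= C * w m l / l ^ i) ->
    exists C, 0 <= C /\ forall m l, 2 <= m -> 0 < l -> Rabs (F j l) <= C * (w m l / l ^ j)).
  { intros j F w H. destruct (H j) as [C [HC H']]. exists C; split; auto.
    intros m l Hm Hl. unfold Rdiv in *. rewrite <- Rmult_assoc. auto. }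
  induction n as [|n IH]; intros j F w Hd HB.
  - split; [apply Hb; auto|exact I].
  - split; [apply Hb; auto|]. exists (fun _ l => F (S j) l). split.
    + intros m l Hm Hl. apply Hd; auto.
    + apply (Sym_weaken n (fun m l => w m l / l ^ (S j)) _ _ 1); [lra| |apply IH; auto].
      intros m l Hm Hl. right. simpl. field. repeat split; try lra; apply pow_nonzero; lra.
Qed.

Lemma zero_deriv (g : R -> R) (c x d : R) : locally x (fun t => c = g t) -> is_derive g x d -> d = 0.
Proof.
  intros Hl Hd. assert (H1 : is_derive (fun _ => c) x d).
  { apply (is_derive_ext_loc g); auto. apply (filter_imp (fun t => c = g t)); auto. }
  apply is_derive_unique in H1. rewrite Derive_const in H1. auto.
Qed.

Section Chi.
Variables (lambda1 : R) (chi : R -> R) (F : nat -> R -> R).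
Hypothesis Hl1 : 0 < lambda1.
Hypothesis HF : derivs_on pos_reals chi F.
Hypothesis Hchi_nonneg : forall s, 0 <= s -> 0 <= chi s.
Hypothesis Hchi_one : forall s, 0 <= s < lambda1 / 2 -> chi s = 1.
Hypothesis Hchi_zero : forall s, lambda1 < s -> chi s = 0.

Lemma chiF_d i x : 0 < x -> is_derive (F i) x (F (S i) x).
Proof. intros Hx. apply is_derive_Reals. apply (proj2 HF); auto. Qed.

Lemma chiF_left i : forall x, 0 < x < lambda1 / 2 -> F i x = match i with O => 1 | _ => 0 end.
Proof.
  induction i as [|i IH]; intros x Hx.
  - rewrite (proj1 HF) by (unfold pos_reals; lra). apply Hchi_one; lra.
  - apply (zero_deriv (F i) (match i with O => 1 | _ => 0 end) x); [|apply chiF_d; lra].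
    apply (filter_imp (fun t => 0 < t /\ t < lambda1/2)).
    + intros t Ht. symmetry; apply IH; auto.
    + apply filter_and; [apply (open_gt 0 x); lra|apply (open_lt (lambda1/2) x); lra].
Qed.

Lemma chiF_right i : forall x, lambda1 < x -> F i x = 0.
Proof.
  induction i as [|i IH]; intros x Hx.
  - rewrite (proj1 HF) by (unfold pos_reals; lra). apply Hchi_zero; lra.
  - apply (zero_deriv (F i) 0 x); [|apply chiF_d; lra].
    apply (filter_imp (fun t => lambda1 < t)).
    + intros t Ht. symmetry; apply IH; auto.
    + apply (open_gt lambda1 x); lra.
Qed.

Lemma chiF_bdd i : exists M, 0 <= M /\ forall x, 0 < x -> Rabs (F i x) <= M.
Proof.
  destruct (continuity_ab_maj (fun x => Rabs (F i x)) (lambda1/2) lambda1) as [Mx [HM HMx]]; [lra| |].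
  - intros c Hc. apply (continuity_pt_comp (F i) Rabs).
    + apply derivable_continuous_pt. exists (F (S i) c). apply (proj2 HF). unfold pos_reals; lra.
    + apply Rcontinuity_abs.
  - exists (Rmax 1 (Rabs (F i Mx))). split; [eapply Rle_trans; [|apply Rmax_l]; lra|].
    intros x Hx. destruct (Rlt_le_dec x (lambda1/2)) as [H1|H1].
    + rewrite chiF_left by lra. destruct i; [rewrite Rabs_R1; apply Rmax_l|rewrite Rabs_R0].
      eapply Rle_trans; [|apply Rmax_l]; lra.
    + destruct (Rle_lt_dec x lambda1) as [H2|H2].
      * eapply Rle_trans; [apply HM; lra|apply Rmax_r].
      * rewrite chiF_right by lra. rewrite Rabs_R0. eapply Rle_trans; [|apply Rmax_l]; lra.
Qed.

Lemma chiF_sym i : exists C, 0 <= C /\ forall m l, 2 <= m -> 0 < l -> Rabs (F i l) <= C * 1 / l ^ i.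
Proof.
  destruct (chiF_bdd i) as [M [HM Hb]]. exists (M * lambda1 ^ i). split.
  { apply Rmult_le_pos; auto. apply pow_le; lra. }
  intros m l Hm Hl. assert (Hli : 0 < l ^ i) by (apply pow_lt; lra).
  destruct (Rle_lt_dec l lambda1) as [H1|H1].
  - assert (Hp : l ^ i <= lambda1 ^ i) by (apply pow_incr; lra).
    eapply Rle_trans; [apply Hb; auto|].
    apply (Rmult_le_reg_r (l ^ i)); auto.
    replace (M * lambda1 ^ i * 1 / l ^ i * l ^ i) with (M * lambda1 ^ i) by (field; lra).
    apply Rmult_le_compat_l; auto.
  - rewrite chiF_right by lra. rewrite Rabs_R0. apply Rmult_le_pos; [|left; apply Rinv_0_lt_compat; auto].
    rewrite Rmult_1_r. apply Rmult_le_pos; auto. apply pow_le; lra.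
Qed.

Lemma chi_Sym n : Sym n (fun _ _ => 1) (fun _ l => chi l).
Proof.
  apply (Sym_ext n _ (fun _ l => F 0 l)).
  { intros m l Hm Hl. apply (proj1 HF). exact Hl. }
  apply (Sym_weaken n (fun m l => 1 / l ^ 0) _ _ 1); [lra| |].
  - intros; simpl; lra.
  - apply Sym_of_seq; [intros; apply chiF_d; auto|].
    intros i. destruct (chiF_sym i) as [C [HC H]]. exists C; split; auto.
Qed.
End Chi.

Definition Sq (m l : R) := sqrt (l + m ^ 2).

Lemma Sq_facts m l : 2 <= m -> 0 < l ->
  0 < Sq m l /\ m <= Sq m l /\ sqrt (l + 1) <= Sq m l /\ Sq m l * Sq m l = l + m ^ 2.
Proof.
  intros Hm Hl. unfold Sq. repeat split.
  - apply sqrt_lt_R0. (simpl; nra).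
  - apply Rle_trans with (sqrt (m * m)); [right; symmetry; apply sqrt_square; lra|]. apply sqrt_le_1_alt. (simpl; nra).
  - apply sqrt_le_1_alt. (simpl; nra).
  - apply sqrt_sqrt. (simpl; nra).
Qed.

Section Main.
Variables (lambda1 : R) (chi : R -> R) (F : nat -> R -> R).
Hypothesis Hl1 : 0 < lambda1.
Hypothesis HF : derivs_on pos_reals chi F.
Hypothesis Hchi_nonneg : forall s, 0 <= s -> 0 <= chi s.
Hypothesis Hchi_one : forall s, 0 <= s < lambda1 / 2 -> chi s = 1.
Hypothesis Hchi_zero : forall s, lambda1 < s -> chi s = 0.

Let chiS n := chi_Sym lambda1 chi F Hl1 HF Hchi_one Hchi_zero n.

Lemma U_Sym n : Sym n (fun m l => l + m ^ 2) (fun m l => l + m ^ 2).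
Proof.
  apply (Sym_plus n _ (fun _ l => l) (fun m _ => m ^ 2)).
  - apply (Sym_weaken n (fun _ l => l) _ _ 1); [lra| |apply Sym_id].
    intros m l Hm Hl. (simpl; nra).
  - apply Sym_cst. exists 1; split; [lra|]. intros m l Hm Hl.
    rewrite Rabs_pos_eq by (simpl; nra). (simpl; nra).
Qed.

Lemma S_Sym n : Sym n Sq (fun m l => sqrt (l + m ^ 2)).
Proof.
  apply (Sym_sqrt n Sq _ 1); [lra| |].
  - intros m l Hm Hl. destruct (Sq_facts m l Hm Hl) as [H1 [H2 [H3 H4]]]. split; lra.
  - apply (Sym_weaken n (fun m l => l + m ^ 2) _ _ 1); [lra| |apply U_Sym].
    intros m l Hm Hl. destruct (Sq_facts m l Hm Hl) as [H1 [H2 [H3 H4]]]. lra.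
Qed.

Lemma SPm_Sym n : Sym n Sq (fun m l => sqrt (l + m ^ 2) + m).
Proof.
  apply (Sym_plus n _ (fun m l => sqrt (l + m ^ 2)) (fun m _ => m)); [apply S_Sym|].
  apply Sym_cst. exists 1; split; [lra|]. intros m l Hm Hl.
  destruct (Sq_facts m l Hm Hl) as [H1 [H2 [H3 H4]]]. rewrite Rabs_pos_eq; lra.
Qed.

Lemma iSPm_Sym n : Sym n (fun m l => / Sq m l) (fun m l => / (sqrt (l + m ^ 2) + m)).
Proof.
  apply (Sym_inv n Sq _ 1); [lra| |apply SPm_Sym].
  intros m l Hm Hl. destruct (Sq_facts m l Hm Hl) as [H1 [H2 [H3 H4]]]. unfold Sq in *. lra.
Qed.

Lemma R1_Sym n : Sym n (fun m l => l * / Sq m l) (fun m l => l * / (sqrt (l + m ^ 2) + m)).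
Proof. apply (Sym_mult n (fun _ l => l) _ (fun _ l => l)); [apply Sym_id|apply iSPm_Sym]. Qed.

Lemma mR1_Sym n : Sym n (fun m l => m * (l * / Sq m l)) (fun m l => m * (l * / (sqrt (l + m ^ 2) + m))).
Proof.
  apply (Sym_mult n (fun m _ => m) _ (fun m _ => m)); [|apply R1_Sym].
  apply Sym_cst. exists 1; split; [lra|]. intros m l Hm Hl. rewrite Rabs_pos_eq; lra.
Qed.

Definition wP (m l : R) := m * (l * / Sq m l) + 1.
Definition PmE (m l : R) := 2 * (m * (l * / (sqrt (l + m ^ 2) + m))) + chi l.

Lemma a_nonneg m l : 2 <= m -> 0 < l -> 0 <= m * (l * / Sq m l).
Proof.
  intros Hm Hl. destruct (Sq_facts m l Hm Hl) as [H1 [H2 [H3 H4]]].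
  apply Rmult_le_pos; [lra|]. apply Rmult_le_pos; [lra|]. left; apply Rinv_0_lt_compat; auto.
Qed.

Lemma PmE_Sym n : Sym n wP PmE.
Proof.
  apply (Sym_plus n _ (fun m l => 2 * (m * (l * / (sqrt (l + m ^ 2) + m)))) (fun _ l => chi l)).
  - apply (Sym_weaken n (fun m l => m * (l * / Sq m l)) _ _ 2); [lra| |apply Sym_scal; apply mR1_Sym].
    intros m l Hm Hl. unfold wP. pose proof (a_nonneg m l Hm Hl). lra.
  - apply (Sym_weaken n (fun _ _ => 1) _ _ 1); [lra| |apply chiS].
    intros m l Hm Hl. unfold wP. pose proof (a_nonneg m l Hm Hl). lra.
Qed.

Lemma inv_half (s m : R) : 0 < s -> m <= s -> 0 < m -> / s <= 2 * / (s + m).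
Proof.
  intros Hs Hms Hm. replace (2 * / (s + m)) with (/ ((s + m) / 2)) by (field; lra).
  apply Rinv_le_contravar; lra.
Qed.

Lemma Sm_id m l : 2 <= m -> 0 < l -> sqrt (l + m ^ 2) - m = l * / (sqrt (l + m ^ 2) + m).
Proof.
  intros Hm Hl. destruct (Sq_facts m l Hm Hl) as [H1 [H2 [H3 H4]]]. unfold Sq in *.
  set (s := sqrt (l + m ^ 2)) in *.
  assert (E : l = (s - m) * (s + m)) by (simpl in H4; lra).
  rewrite E. field. lra.
Qed.

Lemma PmE_lower m l : 2 <= m -> 0 < l -> 0 < wP m l /\ wP m l <= (2 + 2 / lambda1) * PmE m l.
Proof.
  intros Hm Hl. pose proof (a_nonneg m l Hm Hl) as Ha.
  destruct (Sq_facts m l Hm Hl) as [H1 [H2 [H3 H4]]].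
  unfold wP, PmE. fold (Sq m l). set (s := Sq m l) in *.
  assert (Hk1 : m * (l * / s) <= 2 * (m * (l * / (s + m)))).
  { pose proof (inv_half s m H1 H2 ltac:(lra)).
    replace (2 * (m * (l * / (s + m)))) with ((m * l) * (2 * / (s + m))) by ring.
    replace (m * (l * / s)) with ((m*l) * / s) by ring.
    apply Rmult_le_compat_l; [(simpl; nra)|auto]. }
  assert (HL : 0 < 2 / lambda1) by (apply Rdiv_lt_0_compat; lra).
  split; [lra|].
  destruct (Rlt_le_dec l (lambda1 / 2)) as [Hl2|Hl2].
  - rewrite Hchi_one by lra. assert (0 <= 2 * (m * (l * / (s + m)))) by lra. nra.
  - pose proof (Hchi_nonneg l ltac:(lra)) as Hc.
    set (K := 1 + 2 / lambda1).
    assert (HKl : 1 <= 2 / lambda1 * l).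
    { replace (2 / lambda1 * l) with (1 + (2 * l - lambda1) / lambda1) by (field; lra).
      assert (0 <= (2 * l - lambda1) / lambda1) by (apply Rdiv_le_0_compat; lra). lra. }
    assert (HsK : s <= K * m * l).
    { unfold s, Sq. rewrite <- (sqrt_square (K * m * l)) by (unfold K; (simpl; nra)).
      apply sqrt_le_1_alt. unfold K. simpl.
      assert (1 <= m * m) by nra.
      replace ((1 + 2 / lambda1) * m * l * ((1 + 2 / lambda1) * m * l)) with
        ((m * m) * ((l + 2 / lambda1 * l) * (l + 2 / lambda1 * l))) by ring.
      set (p := l + 2 / lambda1 * l).
      assert (Hp : l + 1 <= p * p) by (unfold p; nra).
      nra. }
    assert (HKa : 1 <= K * (m * (l * / s))).
    { replace (K * (m * (l * / s))) with ((K * m * l) * / s) by ring.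
      apply (Rmult_le_reg_r s); auto. rewrite Rmult_assoc, Rinv_l by lra. lra. }
    unfold K in HKa. nra.
Qed.

Lemma iPmE_Sym n : Sym n (fun m l => / wP m l) (fun m l => / PmE m l).
Proof.
  apply (Sym_inv n wP PmE (2 + 2 / lambda1)); [|apply PmE_lower|apply PmE_Sym].
  assert (0 < 2 / lambda1) by (apply Rdiv_lt_0_compat; lra). lra.
Qed.

Lemma Pi_Sym n : Sym n (fun _ l => l + 1) (fun _ l => l + chi l).
Proof.
  apply (Sym_plus n _ (fun _ l => l) (fun _ l => chi l)).
  - apply (Sym_weaken n (fun _ l => l) _ _ 1); [lra| |apply Sym_id]. intros; lra.
  - apply (Sym_weaken n (fun _ _ => 1) _ _ 1); [lra| |apply chiS]. intros; lra.
Qed.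

Lemma iPi_Sym n : Sym n (fun _ l => / (l + 1)) (fun _ l => / (l + chi l)).
Proof.
  assert (HL : 0 < 2 / lambda1) by (apply Rdiv_lt_0_compat; lra).
  apply (Sym_inv n (fun _ l => l + 1) (fun _ l => l + chi l) (1 + 2 / lambda1)); [lra| |apply Pi_Sym].
  intros m l Hm Hl. split; [lra|].
  destruct (Rlt_le_dec l (lambda1 / 2)) as [Hl2|Hl2].
  - rewrite Hchi_one by lra. nra.
  - pose proof (Hchi_nonneg l ltac:(lra)) as Hc.
    assert (HKl : 1 <= 2 / lambda1 * l).
    { replace (2 / lambda1 * l) with (1 + (2 * l - lambda1) / lambda1) by (field; lra).
      assert (0 <= (2 * l - lambda1) / lambda1) by (apply Rdiv_le_0_compat; lra). lra. }
    nra.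
Qed.

Lemma T1_Sym n : Sym n (fun _ _ => 1) (fun m l => P_m chi m l / P_inf chi l).
Proof.
  apply (Sym_ext n _ (fun m l => PmE m l * / (l + chi l))).
  { intros m l Hm Hl. unfold P_m, P_inf, PmE, Rdiv. rewrite Sm_id by auto. ring. }
  apply (Sym_weaken n (fun m l => wP m l * / (l + 1)) _ _ 1); [lra| |].
  - intros m l Hm Hl. destruct (Sq_facts m l Hm Hl) as [H1 [H2 [H3 H4]]].
    assert (Hms : m * / Sq m l <= 1).
    { apply (Rmult_le_reg_r (Sq m l)); auto. rewrite Rmult_assoc, Rinv_l by lra. lra. }
    assert (wP m l <= l + 1).
    { unfold wP. replace (m * (l * / Sq m l)) with (l * (m * / Sq m l)) by ring. nra. }
    apply (Rmult_le_reg_r (l + 1)); [lra|]. rewrite Rmult_assoc, Rinv_l by lra. lra.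
  - apply (Sym_mult n wP (fun _ l => / (l + 1)) PmE (fun _ l => / (l + chi l))); [apply PmE_Sym|apply iPi_Sym].
Qed.

Lemma alg2 l c m R : 0 < l + c -> 0 < 2 * (m * R) + c -> l = R * (R + 2 * m) ->
  / (l + c) - / (2 * (m * R) + c) = -1 * (R * R * (/ (l + c) * / (2 * (m * R) + c))).
Proof. intros H1 H2 ->. field. lra. Qed.

Lemma T2_Sym n : Sym n (fun m l => Rmin (/ m ^ 2) (/ (m * sqrt (l + 1))))
  (fun m l => / P_inf chi l - / P_m chi m l).
Proof.
  set (R1 := fun m l => l * / (sqrt (l + m ^ 2) + m)).
  apply (Sym_ext n _ (fun m l => -1 * (R1 m l * R1 m l * (/ (l + chi l) * / PmE m l)))).
  { intros m l Hm Hl. unfold P_m, P_inf. rewrite Sm_id by auto.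
    pose proof (PmE_lower m l Hm Hl) as [Hw1 Hw2].
    pose proof (iPi_Sym 0) as _.
    assert (HP : 0 < PmE m l).
    { assert (0 < 2 / lambda1) by (apply Rdiv_lt_0_compat; lra). nra. }
    assert (HPi : 0 < l + chi l).
    { destruct (Rlt_le_dec l (lambda1 / 2)) as [Hl2|Hl2].
      - rewrite Hchi_one by lra. lra.
      - pose proof (Hchi_nonneg l ltac:(lra)). lra. }
    unfold PmE in HP |- *. unfold R1.
    destruct (Sq_facts m l Hm Hl) as [H1 [H2 [H3 H4]]]. unfold Sq in *.
    rewrite <- (Sm_id m l Hm Hl) in HP |- *.
    symmetry. rewrite Rmult_assoc. apply alg2; auto. simpl in H4. simpl. nra. }
  apply (Sym_weaken n (fun m l => l * / Sq m l * (l * / Sq m l) * (/ (l + 1) * / wP m l)) _ _ 1); [lra| |].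
  - intros m l Hm Hl. destruct (Sq_facts m l Hm Hl) as [H1 [H2 [H3 H4]]].
    set (s := Sq m l) in *. unfold wP. fold s.
    assert (Hsq : 0 < sqrt (l + 1)) by (apply sqrt_lt_R0; lra).
    assert (HW : l * / s * (l * / s) * (/ (l + 1) * / (m * (l * / s) + 1)) <= / (m * s)).
    { assert (E : / (m * s) - l * / s * (l * / s) * (/ (l + 1) * / (m * (l * / s) + 1))
                 = (m * l + s * (l + 1)) / (m * s * (l + 1) * (m * l + s))).
      { field. repeat split; try lra; (simpl; nra). }
      assert (0 <= (m * l + s * (l + 1)) / (m * s * (l + 1) * (m * l + s))).
      { apply Rdiv_le_0_compat; [(simpl; nra)|].
        repeat apply Rmult_lt_0_compat; nra. }
      lra. }
    rewrite Rmult_1_l. apply Rmin_glb.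
    + eapply Rle_trans; [exact HW|]. apply Rinv_le_contravar; [(simpl; nra)|]. simpl. nra.
    + eapply Rle_trans; [exact HW|]. apply Rinv_le_contravar; [(simpl; nra)|]. nra.
  - apply Sym_scal. apply Sym_mult.
    + apply Sym_mult; apply R1_Sym.
    + apply (Sym_mult n (fun _ l => / (l + 1)) _ (fun _ l => / (l + chi l))); [apply iPi_Sym|apply iPmE_Sym].
Qed.
End Main.


Theorem propositionA2 (lambda1 : R) (chi : R -> R)
  (Hl1 : 0 < lambda1)
  (Hchi_smooth : smooth_on pos_reals chi)
  (Hchi_nonneg : forall s, 0 <= s -> 0 <= chi s)
  (Hchi_one : forall s, 0 <= s < lambda1 / 2 -> chi s = 1)
  (Hchi_zero : forall s, lambda1 < s -> chi s = 0) :
  forall k : nat, (1 <= k)%nat ->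
  exists Ck : R, 0 < Ck /\
    forall m : R, 2 <= m ->
      (* (1) *)
      smooth_on pos_reals (fun lam => P_m chi m lam / P_inf chi lam) /\
      (forall F, derivs_on pos_reals (fun lam => P_m chi m lam / P_inf chi lam) F ->
         forall lam, 0 < lam -> Rabs (F k lam) <= Ck / lam ^ k) /\
      (* (2) *)
      smooth_on pos_reals (fun lam => / P_inf chi lam - / P_m chi m lam) /\
      (forall F, derivs_on pos_reals (fun lam => / P_inf chi lam - / P_m chi m lam) F ->
         forall lam, 0 < lam ->
           Rabs (F k lam) <=
             Ck / lam ^ k * Rmin (/ m ^ 2) (/ (m * sqrt (lam + 1)))).
Proof.
  intros k Hk. destruct Hchi_smooth as [F HF].
  pose proof (T1_Sym lambda1 chi F Hl1 HF Hchi_nonneg Hchi_one Hchi_zero) as S1.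
  pose proof (T2_Sym lambda1 chi F Hl1 HF Hchi_nonneg Hchi_one Hchi_zero) as S2.
  destruct (Sym_bound k _ _ (S1 k)) as [C1 [HC1 Hb1]].
  destruct (Sym_bound k _ _ (S2 k)) as [C2 [HC2 Hb2]].
  exists (C1 + C2 + 1). split; [lra|]. intros m Hm. split; [|split; [|split]].
  - exact (Sym_smooth _ _ S1 m Hm).
  - intros G HG l Hl. specialize (Hb1 m Hm G HG l Hl).
    eapply Rle_trans; [exact Hb1|]. unfold Rdiv. apply Rmult_le_compat_r.
    + left; apply Rinv_0_lt_compat, pow_lt; lra.
    + lra.
  - exact (Sym_smooth _ _ S2 m Hm).
  - intros G HG l Hl. specialize (Hb2 m Hm G HG l Hl).
    assert (Hmin : 0 <= Rmin (/ m ^ 2) (/ (m * sqrt (l + 1)))).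
    { apply Rmin_glb; left; apply Rinv_0_lt_compat.
      - apply pow_lt; lra.
      - apply Rmult_lt_0_compat; [lra|apply sqrt_lt_R0; lra]. }
    assert (Hi : 0 < / l ^ k) by (apply Rinv_0_lt_compat, pow_lt; lra).
    eapply Rle_trans; [exact Hb2|]. unfold Rdiv.
    replace ((C1 + C2 + 1) * / l ^ k * Rmin (/ m ^ 2) (/ (m * sqrt (l + 1))))
      with ((C1 + C2 + 1) * (Rmin (/ m ^ 2) (/ (m * sqrt (l + 1))) * / l ^ k)) by ring.
    rewrite Rmult_assoc. apply Rmult_le_compat_r; [|lra].
    apply Rmult_le_pos; lra.
Qed.
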